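(* Let $\mathbb{A}$ be an epistemic Heyting algebra, $a\in\mathbb{A}$, $b\in\mathbb{A}$ and $i\in\mathsf{Ag}$. The following are equivalent: (1) $[b]\in\mathsf{Min}_i(\mathbb{A}^a)$; (2) $[b]=[b']$ for a unique $b'\in\mathsf{Min}_i(\mathbb{A})$ such that $b'\wedge a\neq\bot$.
   Context: Fix a set $\mathsf{Ag}$ of agents. A monadic Heyting algebra is a Heyting algebra $\mathbb{L}$ with, for each $i\in\mathsf{Ag}$, monotone unary operations $\lozenge_i,\Box_i$ such that for all $a,b$: $a\leq\lozenge_i a$; $\Box_i a\leq a$; $\lozenge_i(a\vee b)\leq\lozenge_i a\vee\lozenge_i b$; $\Box_i(a\to b)\leq\Box_i a\to\Box_i b$; $\lozenge_i a\leq\Box_i\lozenge_i a$; $\lozenge_i\Box_i a\leq\Box_i a$; $\Box_i(a\to b)\leq\lozenge_i a\to\lozenge_i b$; $\lozenge_i\bot\leq\bot$; $\top\leq\Box_i\top$. An epistemic Heyting algebra is a finite monadic Heyting algebra with $\lozenge_i a\vee\neg\lozenge_i a=\top$ for all $i,a$. An element $c$ is $i$-minimal if $c\neq\bot$, $\lozenge_i c=c$, and whenever $d<c$ and $\lozenge_i d=d$ then $d=\bot$; $\mathsf{Min}_i(\cdot)$ is the set of $i$-minimal elements. The pseudo-quotient algebra $\mathbb{A}^a$: $b\cong_a c$ iff $b\wedge a=c\wedge a$; carrier the quotient Heyting algebra $\mathbb{L}/{\cong_a}$ with classes $[c]$ ($[b]\leq[c]$ iff $b\wedge a\leq c\wedge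 a$); $\lozenge^a_i[b]=[\lozenge_i(b\wedge a)]$, $\Box^a_i[b]=[\Box_i(a\to b)]$; $i$-minimality in $\mathbb{A}^a$ is w.r.t. $\lozenge^a_i$. *)

(* Defs.v *)
From HB Require Import structures.
From mathcomp Require Import all_boot all_order.
Set Implicit Arguments. Unset Strict Implicit. Unset Printing Implicit Defensive.
Import Order.TTheory.
Local Open Scope order_scope.

(* Finiteness (needed for epistemic Heyting algebras) is given by the carrier
   being a finTBDistrLatticeType. *)
Definition is_heyting {d} {L : tbDistrLatticeType d} (imp : L -> L -> L) : Prop :=
  forall a b c : L, (c <= imp a b) = (c `&` a <= b).

Definition hneg {d} {L : tbDistrLatticeType d} (imp : L -> L -> L) (a : L) : L :=
  imp a \bot.

Definition is_monadic_heyting {d} {L : tbDistrLatticeType d} {Ag : Type}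
  (imp : L -> L -> L) (dia box : Ag -> L -> L) : Prop :=
  is_heyting imp /\
  forall i : Ag,
    (forall a b : L, a <= b -> dia i a <= dia i b) /\
    (forall a b : L, a <= b -> box i a <= box i b) /\
    (forall a : L, a <= dia i a) /\
    (forall a : L, box i a <= a) /\
    (forall a b : L, dia i (a `|` b) <= dia i a `|` dia i b) /\
    (forall a b : L, box i (imp a b) <= imp (box i a) (box i b)) /\
    (forall a : L, dia i a <= box i (dia i a)) /\
    (forall a : L, dia i (box i a) <= box i a) /\
    (forall a b : L, box i (imp a b) <= imp (dia i a) (dia i b)) /\
    dia i \bot <= \bot /\
    \top <= box i \top.

Definition is_epistemic_heyting {d} {L : finTBDistrLatticeType d} {Ag : Type}
  (imp : L -> L -> L) (dia box : Ag -> L -> L) : Prop :=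
  is_monadic_heyting imp dia box /\
  forall (i : Ag) (a : L), dia i a `|` hneg imp (dia i a) = \top.

Definition i_minimal {d} {L : tbDistrLatticeType d} (dia : L -> L) (c : L) : Prop :=
  c <> \bot /\ dia c = c /\
  forall e : L, e < c -> dia e = e -> e = \bot.

(* The pseudo-quotient algebra A^a = L / ~=_a, with b ~=_a c iff b /\ a = c /\ a.
   Its classes are [c]; we speak about them via representatives. *)
Definition qeq {d} {L : tbDistrLatticeType d} (a b c : L) : Prop :=
  b `&` a = c `&` a.
Definition qle {d} {L : tbDistrLatticeType d} (a b c : L) : Prop :=
  b `&` a <= c `&` a.
Definition qdia {d} {L : tbDistrLatticeType d} (dia : L -> L) (a b : L) : L :=
  dia (b `&` a).                                      (* dia^a [b] = [dia (b /\ a)] *)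
Definition qbox {d} {L : tbDistrLatticeType d} (imp : L -> L -> L) (box : L -> L)
  (a b : L) : L := box (imp a b).                     (* box^a [b] = [box (a -> b)] *)

(* [c] is i-minimal in A^a (bottom of A^a is [bot]; [e] < [c] means
   [e] <= [c] and [e] <> [c]); quantifying over representatives e is the
   same as quantifying over classes [e]. *)
Definition q_i_minimal {d} {L : tbDistrLatticeType d} (dia : L -> L) (a c : L) : Prop :=
  ~ qeq a c \bot /\ qeq a (qdia dia a c) c /\
  forall e : L, (qle a e c /\ ~ qeq a e c) -> qeq a (qdia dia a e) e -> qeq a e \bot.

(* Main.v *)
Require Import Defs.
From HB Require Import structures.
From mathcomp Require Import all_boot all_order.
Import Order.TTheory.
Local Open Scope order_scope.

Lemma fin_min_elt (disp : Order.disp_t) (L : finTBDistrLatticeType disp)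
  (P : pred L) (x : L) : P x -> exists y, P y /\ forall z, z < y -> ~~ P z.
Proof.
move=> Px.
case: (arg_minnP (fun y => #|[pred w | w < y]|) Px) => y Py Hmin.
exists y; split => // z zy; apply/negP => Pz.
have := Hmin z Pz; rewrite leqNgt => /negP; apply.
apply: proper_card; apply/properP; split.
  by apply/subsetP => w; rewrite !inE => /lt_trans; apply.
by exists z; rewrite !inE ?ltxx.
Qed.

Theorem proposition9 (disp : Order.disp_t) (L : finTBDistrLatticeType disp)
  (Ag : Type) (imp : L -> L -> L) (dia box : Ag -> L -> L)
  (HA : is_epistemic_heyting imp dia box) (a b : L) (i : Ag) :
  q_i_minimal (dia i) a b <->
  (exists! b' : L, i_minimal (dia i) b' /\ b' `&` a <> \bot /\ qeq a b b').
Proof.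
case: HA => [[Hh Hm] He].
have [Dmono [Bmono [Dext [Bdefl [Djoin [BK [DB [DBox [BD [Dbot Btop]]]]]]]]]] := Hm i.
set D := dia i in Dmono Dext Djoin DB DBox BD Dbot *.
have Dbot' : D \bot = \bot by apply/eqP; rewrite -lex0.
have BDeq : forall x, box i (D x) = D x.
  by move=> x; apply/le_anti; rewrite Bdefl DB.
have Didem : forall x, D (D x) = D x.
  move=> x; apply/le_anti; rewrite Dext andbT.
  by have h := DBox (D x); rewrite BDeq in h.
have Cmeet : forall x y, D x = x -> D y = y -> D (x `&` y) = x `&` y.
  move=> x y Hx Hy; apply/le_anti; rewrite Dext andbT lexI.
  apply/andP; split; [rewrite -{2}Hx | rewrite -{2}Hy]; apply: Dmono; [exact: leIl | exact: leIr].
have Hneg1 : forall z, z `&` imp z \bot = \bot.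
  by move=> z; apply/eqP; rewrite -lex0 meetC -Hh.
have Ccompl : forall z, D z = z -> D (imp z \bot) = imp z \bot.
  move=> z Hz.
  have Hz2 : z `|` imp z \bot = \top by have := He i z; rewrite /hneg -/D Hz.
  have nnz : imp (imp z \bot) \bot = z.
    apply/le_anti; apply/andP; split; last by rewrite Hh Hneg1.
    rewrite -[X in X <= _]meetx1 -Hz2 meetUr leUx leIr /=.
    by rewrite meetC Hneg1 le0x.
  have Bz : box i z = z by rewrite -Hz BDeq.
  have := BD (imp z \bot) \bot; rewrite nnz Bz Dbot' Hh => H.
  apply/le_anti; rewrite Dext andbT Hh meetC.
  exact: le_trans H (le_refl _).
split.
- case=> [Hb [Hfix Hmin]].
  rewrite /qeq /qdia meet0x in Hb Hfix Hmin.
  set x := D (b `&` a) in Hfix.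
  have Px : (D x == x) && (x `&` a != \bot) && (x <= x).
    by rewrite /x Didem eqxx Hfix lexx andbT; apply/eqP.
  have [y [/andP [/andP [/eqP Dy ya] yx] ymin]] := @fin_min_elt _ _ (fun y => (D y == y) && (y `&` a != \bot) && (y <= x)) _ Px.
  have yatom : i_minimal D y.
    split; first by move=> y0; move: ya; rewrite y0 meet0x eqxx.
    split => // z zy Dz.
    have za : z `&` a = \bot.
      apply/eqP; apply: contraT => za.
      have := ymin z zy; rewrite Dz eqxx za (le_trans (ltW zy) yx).
      by [].
    set w := y `&` imp z \bot.
    have Dw : D w = w by rewrite Cmeet // Ccompl.
    have wa : w `&` a = y `&` a.
      apply/le_anti; apply/andP; split; first by apply: leI2 => //; exact: leIl.
      rewrite lexI leIr andbT lexI leIl /= Hh.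
      by rewrite -meetA (meetC a) za meetx0.
    have wy : w = y.
      apply/eqP; apply: contraT => wy.
      have := ymin w; rewrite lt_neqAle wy leIl => /(_ isT).
      by rewrite /= Dw eqxx wa ya (le_trans (leIl _ _) yx).
    have : z <= imp z \bot by rewrite -[X in _ <= X]/(imp z \bot); apply: le_trans (ltW zy) _; rewrite -wy leIr.
    by rewrite Hh meetxx lex0 => /eqP.
  have yb : y `&` a <= b `&` a.
    by rewrite -Hfix; apply: leI2; [apply: yx|apply: lexx].
  have yqb : b `&` a = y `&` a.
    apply/eqP; apply: contraT => nq.
    have H := Hmin y.
    have : y `&` a = \bot.
      apply: H; last first.
        apply/le_anti; apply/andP; split; last by rewrite lexI leIr andbT; exact: Dext.
        rewrite lexI leIr andbT; apply: le_trans (leIl _ _) _; rewrite -{2}Dy; apply: Dmono; exact: leIl.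
      by split=> //; move=> e; move: nq; rewrite e eqxx.
    by move/eqP; rewrite (negbTE ya).
  exists y; split; first by split=> //; split; [apply/eqP|].
  move=> b'' [[Hb''0 [Db'' Hb''m]] [Hb''a Hb''q]].
  set w := y `&` b''.
  have Dw : D w = w by rewrite Cmeet.
  have wa : w `&` a = b `&` a.
    have -> : w `&` a = (y `&` a) `&` (b'' `&` a) by rewrite meetACA meetxx.
    by rewrite -yqb -Hb''q meetxx.
  have wne : w <> \bot.
    by move=> w0; move: wa; rewrite w0 meet0x yqb => /esym/eqP; rewrite (negbTE ya).
  have wy : w = y.
    apply/eqP; apply: contraT => ne.
    by case: wne; apply: (proj2 (proj2 yatom)) => //; rewrite lt_neqAle ne leIl.
  have wb : w = b''.
    apply/eqP; apply: contraT => ne.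
    by case: wne; apply: Hb''m => //; rewrite lt_neqAle ne leIr.
  by rewrite -wy.
- case=> b' [[[b'0 [Db' b'm]] [b'a b'q]] _].
  rewrite /q_i_minimal /qeq /qdia /qle meet0x b'q.
  have fixb' : D (b' `&` a) `&` a = b' `&` a.
    apply/le_anti; apply/andP; split; last by rewrite lexI leIr andbT; exact: Dext.
    rewrite lexI leIr andbT; apply: le_trans (leIl _ _) _; rewrite -{2}Db'; apply: Dmono; exact: leIl.
  split=> //; split=> //.
  move=> e [ele ene] efix.
  set y := D (e `&` a).
  have Dy : D y = y by rewrite /y Didem.
  have Dyb : D (y `&` b') = y `&` b' by rewrite Cmeet.
  have [yb|yb] := eqVneq (y `&` b') b'.
    case: ene; apply/le_anti; rewrite ele /= -efix.
    apply: leI2 => //; rewrite -/y -[X in X <= _]yb; exact: leIl.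
  have yb0 := b'm (y `&` b') (ltac:(by rewrite lt_neqAle yb leIr)) Dyb.
  apply/eqP; rewrite -lex0 -yb0 lexI Dext /=.
  apply: le_trans ele _; exact: leIl.
Qed.
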